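(* Let $\chi_1,\dots,\chi_n,\hbar,q_1,\dots,q_n$ be elements of a commutative ring in which all $1-q_i/q_j$ ($i\neq j$) and $q_j$ are invertible (e.g. indeterminates over $\mathbb C$ in the field of rational functions). Let $M(\chi)$ be the $n\times n$ matrix with $M_{ii}=\chi_i$ and $M_{ij}=\frac{\hbar}{1-q_i/q_j}$ for $i\ne j$, and define $\mathcal E_k(\chi)$ by $\det(y\,1_n+M(\chi))=y^n+\sum_{k=1}^n\mathcal E_k(\chi)y^{n-k}$. Then for every $1\le k\le n$, $$\mathcal E_k(\chi)=\sum_K\sum_\pi J(\pi)V(\pi),$$ where $K$ ranges over all $k$-element subsets of $\{1,\dots,n\}$, $\pi$ ranges over all matchings of $K$ (involutions $\pi:K\to K$, $\pi^2=\mathrm{id}$), and $$J(\pi)=\prod_{i:\pi(i)=i}\chi_i,\qquad V(\pi)=\prod_{i<j,\ \pi(i)=j}\frac{\hbar^2q_iq_j}{(q_i-q_j)^2}.$$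
   Context: In the paper this is applied with $\chi_i=D_{-\mathbf e_i}+\hbar\sum_{a<i}\frac{q_a/q_i}{1-q_a/q_i}-\hbar\sum_{b>i}\frac{q_i/q_b}{1-q_i/q_b}$ in $QH^*_{\hat{\mathbb T}}(T^*\mathcal B)$ for $GL(n)$, but the identity is a formal identity in the stated entries. *)

(* Defs.v *)
From HB Require Import structures.
From mathcomp Require Import all_boot all_order all_algebra all_fingroup.
Set Implicit Arguments. Unset Strict Implicit. Unset Printing Implicit Defensive.
Import GRing.Theory.
Local Open Scope ring_scope.

Definition Mchi (R : comUnitRingType) (n : nat) (chi : 'I_n -> R) (hbar : R)
  (q : 'I_n -> R) : 'M[R]_n :=
  \matrix_(i, j) (if i == j then chi i else hbar / (1 - q i / q j)).

Definition detPoly (R : comUnitRingType) (n : nat) (M : 'M[R]_n) : {poly R} :=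
  \det ('X%:M + map_mx polyC M).

Definition Ecoef (R : comUnitRingType) (n : nat) (chi : 'I_n -> R) (hbar : R)
  (q : 'I_n -> R) (k : nat) : R :=
  (detPoly (Mchi chi hbar q))`_(n - k).

(* A matching (involution) of K, represented as a permutation of 'I_n that
   fixes every point outside K and squares to the identity. *)
Definition is_matching (n : nat) (K : {set 'I_n}) (s : {perm 'I_n}) : bool :=
  perm_on K s && (s * s == 1)%g.

Definition Jw (R : comUnitRingType) (n : nat) (chi : 'I_n -> R)
  (K : {set 'I_n}) (s : {perm 'I_n}) : R :=
  \prod_(i in K | s i == i) chi i.

Definition Vw (R : comUnitRingType) (n : nat) (hbar : R) (q : 'I_n -> R)
  (s : {perm 'I_n}) : R :=
  \prod_(i : 'I_n) \prod_(j : 'I_n | (i < j)%N && (s i == j))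
     (hbar ^+ 2 * q i * q j / (q i - q j) ^+ 2).

(* Main.v *)
Require Import Defs.
From HB Require Import structures.
From mathcomp Require Import all_boot all_order all_algebra all_fingroup.
From mathcomp Require Import ring.
Set Implicit Arguments. Unset Strict Implicit. Unset Printing Implicit Defensive.
Import GRing.Theory.
Local Open Scope ring_scope.

Section Bij.
Variable (R : nmodType) (n : nat).
Lemma sum_split_v (v : 'I_n) (P : pred {perm 'I_n}) (g : {perm 'I_n} -> R) :
 \sum_(s | P s && (s v != v)) g s =
 \sum_(s' : {perm 'I_n} | s' v == v) \sum_(p | (p != v) && P (tperm p v * s')%g) g (tperm p v * s')%g.
Proof.
rewrite pair_big_dep /=.
rewrite (reindex_onto (fun j : {perm 'I_n} * 'I_n => (tperm j.2 v * j.1)%g)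
   (fun s : {perm 'I_n} => (tperm (s^-1%g v) v * s, s^-1%g v))%g) /=; last first.
  by move=> s _; rewrite mulgA tperm2 mul1g.
apply: eq_bigl => [[s p]] /=.
rewrite permM tpermR invMg tpermV permM.
case: (eqVneq (s v) v) => [sv|sv].
  have svi : (s^-1)%g v = v by rewrite -{1}sv permK.
  rewrite svi tpermR mulgA tperm2 mul1g eqxx andbT.
  case: (eqVneq p v) => [->|pv]; first by rewrite sv eqxx !andbF.
  have -> : s p != v by apply/eqP => spv; move/eqP: pv; apply; apply: (@perm_inj _ s); rewrite spv sv.
  by rewrite andbT.
rewrite /=; apply/negbTE; apply/negP => /andP[_ /eqP [_ H]].
move: H => /(congr1 (tperm p v)); rewrite tpermK tpermL => H.
by move: sv; rewrite -{1}H permKV eqxx.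
Qed.
End Bij.
Section PartA.
Variables (R : comUnitRingType) (n : nat) (M : 'M[R]_n).

Definition Fm (K : {set 'I_n}) : R :=
  \sum_(s : {perm 'I_n} | perm_on K s) (-1) ^+ s * \prod_(i in K) M i (s i).

Lemma perm_on_setC (K : {set 'I_n}) (s : {perm 'I_n}) :
  perm_on K s = (~: K \subset [set i | s i == i]).
Proof.
apply/subsetP/subsetP => H x.
  rewrite in_setC inE => xK; apply: contraR xK => sx; exact: H.
rewrite inE => sx; apply: contraR sx; rewrite -in_setC => xK.
by have := H x xK; rewrite inE.
Qed.

Lemma coef_prod_one (s : {perm 'I_n}) (m : nat) (c : 'I_n -> R) :
  (\prod_i ('X *+ (i == s i) + (c i)%:P))`_m =
  \sum_(J : {set 'I_n} | (J \subset [set i | s i == i]) && (#|J| == m)) \prod_(i in ~: J) c i.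
Proof.
rewrite bigA_distr coef_sum [RHS]big_mkcond /=.
apply: eq_bigr => J _.
case: (boolP (J \subset _)) => HJ /=.
  rewrite (bigID (mem J)) /=.
  rewrite (eq_bigr (fun _ => 'X)); last first.
    move=> i Ji; rewrite Ji; move/subsetP: HJ => /(_ i Ji); rewrite inE => /eqP ->.
    by rewrite eqxx mulr1n.
  rewrite prodr_const (eq_bigr (fun i => (c i)%:P)); last by move=> i /negbTE ->.
  rewrite -rmorph_prod /= coefMC coefXn eq_sym.
  case: eqP => _; rewrite ?mul1r ?mul0r //.
  by apply: eq_bigl => i; rewrite in_setC.
case/subsetPn: HJ => i Ji; rewrite inE eq_sym => si.
by rewrite (bigD1 i) //= Ji (negbTE si) mulr0n mul0r coef0.
Qed.

Lemma Ecoef_minors (k : nat) : (k <= n)%N ->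
  (detPoly M)`_(n - k) = \sum_(K : {set 'I_n} | #|K| == k) Fm K.
Proof.
move=> kn.
rewrite /Fm (exchange_big_dep xpredT) //=.
rewrite /detPoly /determinant coef_sum.
apply: eq_bigr => s _.
rewrite -(rmorph_sign (@polyC R)) coefCM -big_distrr /=; congr (_ * _).
rewrite (eq_bigr (fun i => 'X *+ (i == s i) + (M i (s i))%:P)); last by move=> i _; rewrite !mxE.
rewrite coef_prod_one.
rewrite (reindex_inj (@setC_inj _)) /=.
apply: eq_big => [K|K _]; last by rewrite setCK.
rewrite -perm_on_setC andbC; congr (_ && _).
have Kn : (#|K| <= n)%N by rewrite -[X in (_ <= X)%N]card_ord max_card.
rewrite [#|~: K|]cardsCs setCK card_ord.
apply/eqP/eqP => [H|->] //.
by rewrite -(subKn Kn) H subKn.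
Qed.
End PartA.
Section Alg.
Variables (R : comUnitRingType) (n : nat) (q : 'I_n -> R).
Hypothesis hq : forall j : 'I_n, q j \is a GRing.unit.
Hypothesis hdiff : forall i j : 'I_n, i != j -> (1 - q i / q j) \is a GRing.unit.

Definition aa i j := (1 - q i / q j)^-1.

Lemma dE i j : (1 - q i / q j) * q j = q j - q i.
Proof. rewrite mulrBl mul1r. by rewrite (divrK (hq j)). Qed.

Lemma d_unit i j : i != j -> (q j - q i) \is a GRing.unit.
Proof. by move=> ij; rewrite -dE unitrM hdiff // hq. Qed.

Lemma aaE i j : i != j -> aa i j * (q j - q i) = q j.
Proof. by move=> ij; rewrite -dE /aa mulrA mulVr ?mul1r // hdiff. Qed.

Lemma unit_cancel (x y d : R) : d \is a GRing.unit -> x * d = y * d -> x = y.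
Proof. by move=> du; apply: (mulIr du). Qed.

Lemma aa_sym i j : i != j -> aa i j + aa j i = 1.
Proof.
move=> ij; apply: (unit_cancel (d_unit ij)).
have e1 := aaE ij; have e2 := aaE (ij : i != j); rewrite eq_sym in ij.
have e3 := aaE ij.
have -> : (aa i j + aa j i) * (q j - q i) = aa i j * (q j - q i) - aa j i * (q i - q j) by ring.
by rewrite e1 e3; ring.
Qed.

Lemma aa_three p v w : p != v -> v != w -> p != w ->
  aa p v * aa v w = aa p w * (aa p v + aa v w - 1).
Proof.
move=> pv vw pw.
have u : (q v - q p) * (q w - q v) * (q w - q p) \is a GRing.unit by rewrite !unitrM !d_unit.
apply: (unit_cancel u).
have e1 := aaE pv; have e2 := aaE vw; have e3 := aaE pw.
set A := aa p v; set B := aa v w; set C := aa p w.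
have -> : A * B * ((q v - q p) * (q w - q v) * (q w - q p)) =
   (A * (q v - q p)) * (B * (q w - q v)) * (q w - q p) by ring.
have -> : C * (A + B - 1) * ((q v - q p) * (q w - q v) * (q w - q p)) =
   (C * (q w - q p)) * ((A * (q v - q p)) * (q w - q v) + (B * (q w - q v)) * (q v - q p)
     - (q v - q p) * (q w - q v)) by ring.
rewrite e1 e2 e3; ring.
Qed.

Lemma aa_pair i j : i != j ->
  - (aa i j * aa j i) = q i * q j / (q i - q j) ^+ 2.
Proof.
move=> ij; have ji : j != i by rewrite eq_sym.
have u : (q i - q j) ^+ 2 \is a GRing.unit by rewrite unitrX // d_unit.
apply: (unit_cancel u); rewrite divrK //.
have e1 := aaE ij; have e2 := aaE ji.
have -> : - (aa i j * aa j i) * (q i - q j) ^+ 2 = (aa i j * (q j - q i)) * (aa j i * (q i - q j)) by ring.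
by rewrite e1 e2 mulrC.
Qed.

Variables (chi : 'I_n -> R) (hbar : R).

Local Notation M := (Mchi chi hbar q).
Definition F K := Fm M K.
Definition G (K : {set 'I_n}) := \sum_(s : {perm 'I_n} | is_matching K s) Jw chi K s * Vw hbar q s.
Definition fv i j := hbar ^+ 2 * q i * q j / (q i - q j) ^+ 2.

Lemma Mentry i j : M i j = if i == j then chi i else hbar * aa i j.
Proof. by rewrite /Mchi mxE. Qed.

Lemma Mthree p v w : p != v -> v != w -> p != w ->
  M p v * M v w = hbar * M p w * (aa p v + aa v w - 1).
Proof.
move=> pv vw pw; rewrite !Mentry (negbTE pv) (negbTE vw) (negbTE pw).
transitivity (hbar * hbar * (aa p v * aa v w)); first by ring.
by rewrite aa_three //; ring.
Qed.

Lemma Mpair v p : p != v -> - (M v p * M p v) = fv v p.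
Proof.
move=> pv; have vp : v != p by rewrite eq_sym.
rewrite !Mentry (negbTE pv) (negbTE vp).
transitivity (hbar ^+ 2 * (- (aa v p * aa p v))); first by ring.
by rewrite aa_pair // /fv !mulrA.
Qed.

Lemma perm_onD1 (K : {set 'I_n}) v (s : {perm 'I_n}) :
  perm_on (K :\ v) s = perm_on K s && (s v == v).
Proof.
apply/idP/andP => [H|[HK sv]].
  split; first exact: subset_trans H (subsetDl _ _).
  by apply/eqP/(out_perm H); rewrite !inE eqxx.
apply/subsetP => x; rewrite inE => sx; rewrite !inE; apply/andP; split.
  by apply: contraNneq sx => ->.
by apply: (subsetP HK); rewrite inE.
Qed.

Lemma perm_on_ins (K : {set 'I_n}) v p (s : {perm 'I_n}) :
  v \in K -> s v = v -> p != v ->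
  perm_on K (tperm p v * s)%g = (p \in K) && perm_on (K :\ v) s.
Proof.
move=> vK sv pv; rewrite perm_onD1 sv eqxx andbT.
apply/idP/andP => [H|[pK HK]].
  split.
    apply: (subsetP H); rewrite inE permM tpermL sv eq_sym; exact: pv.
  apply/subsetP => x; rewrite inE => sx.
  case: (eqVneq x p) => [->|xp] //.
    apply: (subsetP H); rewrite inE permM tpermL sv eq_sym; exact: pv.
  case: (eqVneq x v) => [xv|xv]; first by move: sx; rewrite xv sv eqxx.
  have px : p != x by rewrite eq_sym.
  have vx : v != x by rewrite eq_sym.
  by apply: (subsetP H); rewrite inE permM tpermD.
apply/subsetP => x; rewrite inE permM => sx.
case: (eqVneq x p) => [->|xp] //.
case: (eqVneq x v) => [->|xv] //.
have px : p != x by rewrite eq_sym.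
have vx : v != x by rewrite eq_sym.
by apply: (subsetP HK); rewrite inE; move: sx; rewrite tpermD.
Qed.

Lemma inv_ins v p (s : {perm 'I_n}) : s v = v -> s p = p -> p != v ->
  ((tperm p v * s) * (tperm p v * s))%g = (s * s)%g.
Proof.
move=> sv sp pv.
have C : (tperm p v * s = s * tperm p v)%g.
  apply/permP => x; rewrite !permM.
  case: (eqVneq x p) => [->|xp]; first by rewrite tpermL sp sv tpermL.
  case: (eqVneq x v) => [->|xv]; first by rewrite tpermR sv sp tpermR.
  rewrite tpermD ?(eq_sym p) ?(eq_sym v) //.
  rewrite tpermD //.
    by apply: contra xp => /eqP e; apply/eqP/(@perm_inj _ s); rewrite sp.
  by apply: contra xv => /eqP e; apply/eqP/(@perm_inj _ s); rewrite sv.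
by rewrite {1}C -mulgA (mulgA (tperm p v)) tperm2 mul1g.
Qed.

Lemma not_inv_ins v p (s : {perm 'I_n}) : s v = v -> p != v -> s p != p ->
  ((tperm p v * s) * (tperm p v * s) == 1)%g = false.
Proof.
move=> sv pv sp; apply/negbTE/eqP => H.
have spv : s p != v.
  by apply: contra pv => /eqP e; apply/eqP/(@perm_inj _ s); rewrite e sv.
have := congr1 (fun u : {perm 'I_n} => u v) H.
rewrite !permM perm1 tpermR tpermD // 1?eq_sym //.
move=> e; apply: (negP spv); apply/eqP; apply: (@perm_inj _ s); by rewrite e sv.

Qed.

Lemma is_matching_ins (K : {set 'I_n}) v p (s : {perm 'I_n}) :
  v \in K -> s v = v -> p != v ->
  is_matching K (tperm p v * s)%g = (p \in K :\ v) && is_matching (K :\ v :\ p) s.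
Proof.
move=> vK sv pv; rewrite /is_matching perm_on_ins //.
case: (eqVneq (s p) p) => sp.
  rewrite inv_ins // (perm_onD1 (K :\ v)) sp eqxx andbT !inE pv /=.
  by rewrite andbA.
rewrite not_inv_ins // andbF (perm_onD1 (K :\ v)) (negbTE sp).
by rewrite andbF andFb andbF.
Qed.

Lemma Jw_ins (K : {set 'I_n}) v p (s : {perm 'I_n}) :
  s v = v -> s p = p -> p != v ->
  Jw chi K (tperm p v * s)%g = Jw chi (K :\ v :\ p) s.
Proof.
move=> sv sp pv; rewrite /Jw; apply: eq_bigl => i; rewrite permM !inE.
case: (eqVneq i p) => [->|ip]; first by rewrite tpermL sv eq_sym (negbTE pv) !andbF.
case: (eqVneq i v) => [->|iv]; first by rewrite tpermR sp (negbTE pv) !andbF.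
by rewrite tpermD 1?eq_sym.
Qed.

Lemma Vw_alt (s : {perm 'I_n}) :
  Vw hbar q s = \prod_(i : 'I_n) (if (i < s i)%N then fv i (s i) else 1).
Proof.
apply: eq_bigr => i _; rewrite big_mkcondl /=.
by rewrite (big_pred1 (s i)) // => j; rewrite /= eq_sym.
Qed.

Lemma fv_sym i j : fv i j = fv j i.
Proof. by rewrite /fv -[(q j - q i) ^+ 2]sqrrN opprB (mulrAC _ (q i)). Qed.

Lemma Vw_ins v p (s : {perm 'I_n}) : s v = v -> s p = p -> p != v ->
  Vw hbar q (tperm p v * s)%g = fv v p * Vw hbar q s.
Proof.
move=> sv sp pv; rewrite !Vw_alt (bigD1 p) //= (bigD1 v) 1?eq_sym //=.
rewrite [in RHS](bigD1 p) //= [in RHS](bigD1 v) 1?eq_sym //=.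
rewrite !permM tpermL tpermR sv sp !ltnn !mul1r mulrA; congr (_ * _).
  case: (ltngtP p v) => [lt|gt|e] /=.
  - by rewrite mulr1 fv_sym.
  - by rewrite mul1r.
  - by move/val_inj: e => e; move: pv; rewrite e eqxx.
apply: eq_bigr => i /andP[ip iv]; rewrite permM tpermD // eq_sym //.
Qed.

Lemma sign_ins v p (s : {perm 'I_n}) : p != v ->
  (-1) ^+ (tperm p v * s)%g = - ((-1) ^+ s) :> R.
Proof. by move=> pv; rewrite odd_permM odd_tperm pv signr_addb expr1 mulN1r. Qed.

Lemma key_cancel (K : {set 'I_n}) v (s : {perm 'I_n}) :
  v \in K -> perm_on (K :\ v) s ->
  \sum_(p | (p \in K :\ v) && (s p != p))
     (-1) ^+ (tperm p v * s)%g * \prod_(i in K) M i ((tperm p v * s)%g i) = 0.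
Proof.
move=> vK Hs.
have sv : s v = v by apply: (out_perm Hs); rewrite !inE eqxx.
set W := \prod_(i in K :\ v) M i (s i).
transitivity (\sum_(p | (p \in K :\ v) && (s p != p))
   (- ((-1) ^+ s) * hbar * W) * (aa p v + aa v (s p) - 1)).
  apply: eq_bigr => p /andP[pKv sp].
  have pv : p != v by move: pKv; rewrite !inE => /andP[].
  have spv : v != s p.
    by rewrite eq_sym; apply: contra pv => /eqP e; apply/eqP/(@perm_inj _ s); rewrite e sv.
  have psp : p != s p by rewrite eq_sym.
  rewrite sign_ins // (big_setD1 v vK) (big_setD1 p pKv) /W (big_setD1 p pKv) /=.
  rewrite !permM tpermR tpermL sv.
  set P1 := \prod_(i in K :\ v :\ p) _.
  set P2 := \prod_(i in K :\ v :\ p) _.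
  have -> : P1 = P2.
    apply: eq_bigr => i; rewrite !inE => /andP[ip /andP[iv _]].
    by rewrite permM tpermD // eq_sym.
  have e := Mthree pv spv psp.
  move: e; move: (M p v) (M v (s p)) (M p (s p)) ((-1) ^+ s : R) (aa p v + aa v (s p) - 1) => A B C sg D e.
  transitivity (- sg * (A * B) * P2); first by ring.
  rewrite e; ring.
rewrite -big_distrr /=.
suff -> : \sum_(p | (p \in K :\ v) && (s p != p)) (aa p v + aa v (s p) - 1) = 0 by rewrite mulr0.
rewrite sumrB big_split /=.
have -> : \sum_(p | (p \in K :\ v) && (s p != p)) aa v (s p) =
          \sum_(p | (p \in K :\ v) && (s p != p)) aa v p.
  rewrite [RHS](reindex_inj (@perm_inj _ s)) /=.
  apply: eq_bigl => p; rewrite (perm_closed _ Hs) (inj_eq perm_inj) //.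
rewrite -big_split /=.
rewrite (eq_bigr (fun _ => 1)) ?subrr // => p /andP[]; rewrite !inE => /andP[pv _] _.
exact: aa_sym.
Qed.

Lemma F_rec (K : {set 'I_n}) v : v \in K ->
  F K = chi v * F (K :\ v) + \sum_(p in K :\ v) fv v p * F (K :\ v :\ p).
Proof.
move=> vK; rewrite /F /Fm (bigID (fun s : {perm 'I_n} => s v == v)) /=; congr (_ + _).
  rewrite big_distrr /=; apply: eq_big => s; first by rewrite perm_onD1.
  move=> /andP[_ /eqP sv]; rewrite (big_setD1 v vK) /= sv Mentry eqxx.
  by rewrite mulrCA.
rewrite (sum_split_v v (perm_on K)).
transitivity (\sum_(s | perm_on (K :\ v) s) \sum_(p in K :\ v)
   (-1) ^+ (tperm p v * s)%g * \prod_(i in K) M i ((tperm p v * s)%g i)).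
  rewrite (bigID (perm_on (K :\ v))) /= [X in _ + X]big1 ?addr0.
    apply: eq_big => s; first by rewrite perm_onD1 andbC -andbA andbb.
    move=> /andP[_ Hs]; have sv : s v = v by apply: (out_perm Hs); rewrite !inE eqxx.
    apply: eq_bigl => p; case: (eqVneq p v) => [->|pv]; first by rewrite !inE eqxx.
    by rewrite perm_on_ins // Hs andbT !inE pv.
  move=> s /andP[/eqP sv Hs]; apply: big_pred0 => p.
  case: (eqVneq p v) => [->|pv] //=.
  by rewrite perm_on_ins // (negbTE Hs) andbF.
transitivity (\sum_(s | perm_on (K :\ v) s) \sum_(p | (p \in K :\ v) && perm_on (K :\ v :\ p) s)
   fv v p * ((-1) ^+ s * \prod_(i in K :\ v :\ p) M i (s i))).
  apply: eq_bigr => s Hs.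
  have sv : s v = v by apply: (out_perm Hs); rewrite !inE eqxx.
  rewrite (bigID (fun p => s p == p)) /= [X in _ + X]key_cancel // addr0.
  apply: eq_big => p; first by rewrite (perm_onD1 (K :\ v)) Hs.
  move=> /andP[pKv /eqP sp].
  have pv : p != v by move: pKv; rewrite !inE => /andP[].
  rewrite sign_ins // (big_setD1 v vK) (big_setD1 p pKv) /= !permM tpermR tpermL sp sv.
  rewrite -(Mpair pv).
  rewrite (eq_bigr (fun i => M i (s i))).
    move: (M v p) (M p v) ((-1) ^+ s : R) (\prod_(i in K :\ v :\ p) M i (s i)) => A B sg P.
    by ring.
  move=> i; rewrite !inE => /andP[ip /andP[iv _]].
  by rewrite permM tpermD // eq_sym.
rewrite (exchange_big_dep (mem (K :\ v))) /=; last by move=> s p _ /andP[].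
apply: eq_bigr => p pKv; rewrite big_distrr /=.
apply: eq_bigl => s; rewrite pKv /=.
apply/andP/idP => [[] //|H]; split => //.
by move: H; rewrite (perm_onD1 (K :\ v)) => /andP[].
Qed.

Lemma G_rec (K : {set 'I_n}) v : v \in K ->
  G K = chi v * G (K :\ v) + \sum_(p in K :\ v) fv v p * G (K :\ v :\ p).
Proof.
move=> vK; rewrite /G (bigID (fun s : {perm 'I_n} => s v == v)) /=; congr (_ + _).
  rewrite big_distrr /=; apply: eq_big => s.
    by rewrite /is_matching perm_onD1 andbAC.
  move=> /andP[_ sv]; rewrite mulrA; congr (_ * _).
  rewrite /Jw (bigD1 v) /=; last by rewrite vK sv.
  congr (_ * _); apply: eq_bigl => i; rewrite !inE.
  by case: (i \in K); case: (i == v); rewrite ?andbT ?andbF.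
rewrite (sum_split_v v (is_matching K)).
transitivity (\sum_(s : {perm 'I_n} | s v == v) \sum_(p | (p \in K :\ v) && is_matching (K :\ v :\ p) s)
   fv v p * (Jw chi (K :\ v :\ p) s * Vw hbar q s)).
  apply: eq_bigr => s /eqP sv; apply: eq_big => p.
    case: (eqVneq p v) => [->|pv]; first by rewrite !inE eqxx.
    by rewrite is_matching_ins.
  move=> /andP[pv]; rewrite is_matching_ins // => /andP[pKv Hm].
  have sp : s p = p by apply: (out_perm (proj1 (andP Hm))); rewrite !inE eqxx.
  by rewrite Jw_ins // Vw_ins // mulrCA.
rewrite (exchange_big_dep (mem (K :\ v))) /=; last by move=> s p _ /andP[].
apply: eq_bigr => p pKv; rewrite big_distrr /=.
apply: eq_bigl => s; rewrite pKv /=.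
apply/andP/idP => [[] //|H]; split => //.
have vn : v \notin K :\ v :\ p by rewrite !inE eqxx andbF.
by rewrite (out_perm (proj1 (andP H)) vn).
Qed.

Lemma perm_on0 (s : {perm 'I_n}) : perm_on set0 s = (s == 1%g).
Proof.
apply/idP/eqP => [H|->]; last exact: perm_on1.
by apply: (perm_on_id H); rewrite cards0.
Qed.

Lemma F0 : F set0 = 1.
Proof.
rewrite /F /Fm (eq_bigl _ _ perm_on0) big_pred1_eq odd_perm1 expr0 mul1r.
by rewrite big_set0.
Qed.

Lemma G0 : G set0 = 1.
Proof.
have E : is_matching (set0 : {set 'I_n}) =1 pred1 1%g.
  move=> s; rewrite /is_matching perm_on0 /=.
  by case: (eqVneq s 1%g) => [->|] //; rewrite mulg1 eqxx.
rewrite /G (eq_bigl _ _ E) big_pred1_eq Vw_alt /Jw big_pred0 ?mul1r.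
  by apply: big1 => i _; rewrite perm1 ltnn.
by move=> i; rewrite in_set0.
Qed.

Lemma FG (K : {set 'I_n}) : F K = G K.
Proof.
move: {2}#|K| (leqnn #|K|) => m; elim: m K => [|m IH] K Km.
  move: Km; rewrite leqn0 => /eqP /cards0_eq ->; by rewrite F0 G0.
case: (set_0Vmem K) => [->|[v vK]]; first by rewrite F0 G0.
have Kv : (#|K :\ v| <= m)%N by move: Km; rewrite (cardsD1 v K) vK.
rewrite (F_rec vK) (G_rec vK) IH //; congr (_ + _).
apply: eq_bigr => p pKv; rewrite IH //.
by apply: leq_trans Kv; rewrite (cardsD1 p (K :\ v)) leq_addl.
Qed.

End Alg.

Theorem mainTheorem14 (R : comUnitRingType) (n : nat)
  (chi : 'I_n -> R) (hbar : R) (q : 'I_n -> R)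
  (hq : forall j : 'I_n, q j \is a GRing.unit)
  (hdiff : forall i j : 'I_n, i != j -> (1 - q i / q j) \is a GRing.unit)
  (k : nat) (hk : (1 <= k <= n)%N) :
  Ecoef chi hbar q k =
  \sum_(K : {set 'I_n} | #|K| == k)
     \sum_(s : {perm 'I_n} | is_matching K s) Jw chi K s * Vw hbar q s.
Proof.
rewrite /Ecoef Ecoef_minors; last by case/andP: hk.
apply: eq_bigr => K _.
exact: (FG hq hdiff chi hbar K).
Qed.
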